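(* Let $n\ge 2$ and let $\Delta$ be a finite subset of $\mathbb{A}^n_{\mathbb{C}}$. Then $\mathrm{Stab}(\Delta)=\{f\in\mathrm{Aut}(\mathbb{A}^n_{\mathbb{C}}): f(\Delta)=\Delta\}$ is a maximal subgroup of $\mathrm{Aut}(\mathbb{A}^n_{\mathbb{C}})$, and it is closed in $\mathrm{Aut}(\mathbb{A}^n_{\mathbb{C}})$.
   Context: $\mathrm{Aut}(\mathbb{A}^n_{\mathbb{C}})$ is the group of polynomial automorphisms of $\mathbb{A}^n_{\mathbb{C}}$, an ind-group for the filtration by degree; a subset is closed iff its intersection with the variety of automorphisms of degree $\le d$ is Zariski closed for every $d$. *)

(* Defs.v *)
From HB Require Import structures.
From mathcomp Require Import all_boot all_order all_algebra.
From mathcomp Require Import Rstruct.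
From mathcomp Require Import complex.
From mathcomp Require Import mpoly.
From Stdlib Require Rdefinitions.

Set Implicit Arguments.
Unset Strict Implicit.
Unset Printing Implicit Defensive.

Import GRing.Theory Num.Theory.
Local Open Scope ring_scope.

Definition CC : numClosedFieldType := (Rdefinitions.R)[i].

(** Polynomial endomorphisms of A^n_C: an n-tuple (f_1,...,f_n) of
    polynomials in n variables. *)
Definition polymap (n : nat) := n.-tuple {mpoly CC[n]}.

Definition pm_id (n : nat) : polymap n := [tuple 'X_i | i < n].

(** Composition: (f \o g)(x) = f (g x), i.e. substitute X_j := g_j in f_i. *)
Definition pm_comp (n : nat) (f g : polymap n) : polymap n :=
  [tuple comp_mpoly g (tnth f i) | i < n].

Definition pm_eval (n : nat) (f : polymap n) (x : 'I_n -> CC) : 'I_n -> CC :=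
  fun i => (tnth f i).@[x].

Definition is_aut (n : nat) (f : polymap n) : Prop :=
  exists g : polymap n, pm_comp f g = pm_id n /\ pm_comp g f = pm_id n.

Definition is_subgroup_aut (n : nat) (H : polymap n -> Prop) : Prop :=
  [/\ (forall f, H f -> is_aut f),
      H (pm_id n),
      (forall f g, H f -> H g -> H (pm_comp f g)) &
      (forall f g, H f -> pm_comp f g = pm_id n -> pm_comp g f = pm_id n -> H g)].

Definition is_maximal_subgroup_aut (n : nat) (S : polymap n -> Prop) : Prop :=
  [/\ is_subgroup_aut S,
      (exists f, is_aut f /\ ~ S f) &
      (forall H, is_subgroup_aut H -> (forall f, S f -> H f) ->
          (forall f, H f -> S f) \/ (forall f, is_aut f -> H f))].

Definition Stab (n : nat) (Delta : ('I_n -> CC) -> Prop) (f : polymap n) : Prop :=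
  is_aut f /\
  (forall y, Delta y <-> exists x, Delta x /\ pm_eval f x = y).

(** deg f <= d : every component has total degree <= d. *)
Definition pm_deg_le (n d : nat) (f : polymap n) : bool :=
  [forall i, (msize (tnth f i) <= d.+1)%N].

(** Coordinates of a polynomial map of degree <= d in the affine space
    End(A^n)_{<=d}: the coefficient of each monomial of degree <= d in each
    component. *)
Definition pm_coords (n d : nat) (f : polymap n) :
    ('I_n * 'X_{1..n < d.+1}) -> CC :=
  fun im => (tnth f im.1)@_(val im.2).

Definition zariski_closed (T : finType) (Z : (T -> CC) -> Prop) : Prop :=
  exists P : {mpoly CC[#|T|]} -> Prop,
    forall v : T -> CC,
      Z v <-> (forall p, P p -> p.@[fun k => v (enum_val k)] = 0).

(** A subset S of Aut(A^n) is closed for the ind-topology: for every d,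
    S cap Aut_{<=d} is Zariski closed in Aut_{<=d}, i.e. it is the trace on
    Aut_{<=d} of a Zariski closed subset of End_{<=d}. *)
Definition ind_closed (n : nat) (S : polymap n -> Prop) : Prop :=
  forall d : nat,
    exists Z : (('I_n * 'X_{1..n < d.+1}) -> CC) -> Prop,
      zariski_closed Z /\
      (forall f, is_aut f -> @pm_deg_le n d f -> (S f <-> Z (@pm_coords n d f))).

(* Main.v *)
Require Import Defs.
From HB Require Import structures.
From mathcomp Require Import all_boot all_order all_algebra.
From mathcomp Require Import Rstruct complex mpoly.
From Stdlib Require Import FunctionalExtensionality.
From Stdlib Require Classical.
From mathcomp Require Import ring.

Set Implicit Arguments.
Unset Strict Implicit.
Unset Printing Implicit Defensive.
Import GRing.Theory Num.Theory.
Local Open Scope ring_scope.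


Section Infra.
Variable n : nat.
Implicit Types f g h : polymap n.

Lemma comp_mpolyA (p : {mpoly CC[n]}) (lq lr : polymap n) :
  comp_mpoly lr (comp_mpoly lq p) =
  comp_mpoly [tuple comp_mpoly lr (tnth lq i) | i < n] p.
Proof.
rewrite [comp_mpoly lq p]comp_mpolyEX [in RHS](mpolyE p) !raddf_sum /=.
apply/eq_bigr => m _.

rewrite comp_mpolyZ.
have := (comp_mpolyZ (p@_m) 'X_[m] [tuple comp_mpoly lr (tnth lq i) | i < n]).
move=> ->; apply: f_equal.
rewrite comp_mpolyX comp_mpolyX rmorph_prod /=.
by apply/eq_bigr=> i _; rewrite rmorphXn /= tnth_mktuple.
Qed.

Lemma tnth_pm_comp (f g : polymap n) i : tnth (pm_comp f g) i = comp_mpoly g (tnth f i).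
Proof. exact: tnth_mktuple. Qed.
Lemma tnth_pm_id i : tnth (pm_id n) i = 'X_i.
Proof. exact: tnth_mktuple. Qed.

Lemma pm_compA f g h : pm_comp f (pm_comp g h) = pm_comp (pm_comp f g) h.
Proof.
apply/eq_from_tnth => i.
rewrite -> !tnth_pm_comp.
rewrite comp_mpolyA.
by congr comp_mpoly; apply/eq_from_tnth => j; rewrite tnth_pm_comp tnth_mktuple.
Qed.

Lemma pm_comp1 f : pm_comp f (pm_id n) = f.
Proof. by apply/eq_from_tnth => i; rewrite tnth_pm_comp comp_mpoly_id. Qed.

Lemma pm_1comp f : pm_comp (pm_id n) f = f.
Proof.
by apply/eq_from_tnth => i; rewrite tnth_pm_comp tnth_pm_id comp_mpolyXU -tnth_nth.
Qed.

Local Notation pt := {ffun 'I_n -> CC}.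
Definition ev f (x : pt) : pt := [ffun i => (tnth f i).@[x]].

Lemma ev_comp f g x : ev (pm_comp f g) x = ev f (ev g x).
Proof.
apply/ffunP => i; rewrite !ffunE tnth_pm_comp comp_mpoly_meval.
by apply: meval_eq => j; rewrite ffunE.
Qed.

Lemma ev_id x : ev (pm_id n) x = x.
Proof. by apply/ffunP => i; rewrite ffunE tnth_pm_id mevalXU. Qed.

Lemma aut_comp f g : is_aut f -> is_aut g -> is_aut (pm_comp f g).
Proof.
move=> [f' [ff' f'f]] [g' [gg' g'g]]; exists (pm_comp g' f'); split.
  by rewrite -pm_compA (pm_compA g) gg' pm_1comp ff'.
by rewrite -pm_compA (pm_compA f') f'f pm_1comp g'g.
Qed.

Lemma aut_id : is_aut (pm_id n).
Proof. by exists (pm_id n); rewrite pm_comp1. Qed.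

Lemma aut_inj f : is_aut f -> injective (ev f).
Proof.
move=> [f' [_ f'f]] x y e.
by rewrite -(ev_id x) -(ev_id y) -f'f !ev_comp e.
Qed.

Definition upX (P : {poly CC}) (j : 'I_n) : {mpoly CC[n]} :=
  (map_poly (@mpolyC n CC) P).['X_j].

Lemma upX_comp P j (lq : polymap n) :
  comp_mpoly lq (upX P j) = (map_poly (@mpolyC n CC) P).[tnth lq j].
Proof.
rewrite /upX -horner_map /= -map_poly_comp comp_mpolyXU -tnth_nth.
congr (_.[_]); apply: eq_map_poly => c /=; exact: comp_mpolyC.
Qed.

Lemma upX_eval P j (x : 'I_n -> CC) : (upX P j).@[x] = P.[x j].
Proof.
rewrite /upX -horner_map /= -map_poly_comp mevalXU.
rewrite map_poly_id //= => c _; exact: mevalC.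
Qed.

Lemma upX0 j : upX 0 j = 0.
Proof. by rewrite /upX rmorph0 horner0. Qed.

Lemma upXD P Q j : upX (P + Q) j = upX P j + upX Q j.
Proof. by rewrite /upX rmorphD hornerD. Qed.

Definition shear (j : 'I_n) (P : 'I_n -> {poly CC}) : polymap n :=
  [tuple 'X_i + upX (P i) j | i < n].

Lemma tnth_shear j P i : tnth (shear j P) i = 'X_i + upX (P i) j.
Proof. exact: tnth_mktuple. Qed.

Lemma ev_shear j P x : ev (shear j P) x = [ffun i => x i + (P i).[x j]].
Proof.
by apply/ffunP => i; rewrite !ffunE tnth_shear mevalD mevalXU upX_eval.
Qed.

Lemma shear0 j : shear j (fun _ => 0) = pm_id n.
Proof. by apply/eq_from_tnth => i; rewrite tnth_shear tnth_pm_id upX0 addr0. Qed.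

Lemma shear_comp j P Q : Q j = 0 ->
  pm_comp (shear j P) (shear j Q) = shear j (fun i => Q i + P i).
Proof.
move=> Qj; apply/eq_from_tnth => i; rewrite tnth_pm_comp !tnth_shear.
rewrite comp_mpolyD comp_mpolyXU -tnth_nth upX_comp !tnth_shear Qj upX0 addr0.
by rewrite upXD addrA.
Qed.

Lemma aut_shear j P : P j = 0 -> is_aut (shear j P).
Proof.
move=> Pj; exists (shear j (fun i => - P i)); split.
  rewrite shear_comp ?Pj ?oppr0 //.
  rewrite -(shear0 j); congr shear; apply: functional_extensionality => i; exact: addNr.
rewrite shear_comp //.
rewrite -(shear0 j); congr shear; apply: functional_extensionality => i; exact: addrN.
Qed.

End Infra.


Fixpoint interpP (xs : seq CC) (F : CC -> CC) : {poly CC} :=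
  match xs with
  | [::] => 0
  | a :: xs' => let P := interpP xs' F in
      let W := \prod_(y <- xs') ('X - y%:P) in
      P + ((F a - P.[a]) / W.[a]) *: W
  end.

Lemma interpP_spec (xs : seq CC) (F : CC -> CC) : uniq xs ->
  forall x, x \in xs -> (interpP xs F).[x] = F x.
Proof.
elim: xs => [|a xs IH] //=.
case/andP => axs /IH HP.
set P := interpP xs F; set W := \prod_(y <- xs) ('X - y%:P).
have Wa : W.[a] != 0.
  rewrite horner_prod prodf_seq_neq0; apply/allP => y yxs /=.
  by rewrite hornerXsubC subr_eq0; apply: contra axs => /eqP ->.
move=> x; rewrite inE hornerD hornerZ.
case/orP => [/eqP -> | xxs].
  by rewrite mulfVK // addrC subrK.
have -> : W.[x] = 0.
  apply/eqP; rewrite horner_prod prodf_seq_eq0; apply/hasP; exists x => //=.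
  by rewrite hornerXsubC subrr.
by rewrite HP // mulr0 addr0.
Qed.

Lemma fresh_CC (L : seq CC) : exists c, c \notin L.
Proof.
have U : uniq [seq i%:R : CC | i <- iota 0 (size L).+1].
  rewrite map_inj_uniq ?iota_uniq // => i j /eqP; rewrite eqr_nat => /eqP //.
have /hasP [c _ Hc] : has (fun c => c \notin L) [seq i%:R : CC | i <- iota 0 (size L).+1].
  apply: contraT; rewrite -all_predC => /allP /= H.
  have : {subset [seq i%:R : CC | i <- iota 0 (size L).+1] <= L}.
    by move=> c /H /negPn.
  by move/(uniq_leq_size U); rewrite size_map size_iota ltnn.
by exists c.
Qed.


Section Points.
Variable n : nat.
Hypothesis Hn : (1 < n)%N.
Let i0 : 'I_n := Ordinal (ltnW Hn).
Let i1 : 'I_n := Ordinal Hn.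
Local Notation pt := {ffun 'I_n -> CC}.

Lemma i01 : i0 != i1. Proof. by []. Qed.

Lemma fresh_pt (L : seq pt) : exists x : pt, x \notin L.
Proof.
have [c Hc] := fresh_CC [seq (x : pt) i0 | x <- L].
exists [ffun => c]; apply: contra Hc => H.
by apply/mapP; exists [ffun => c] => //; rewrite ffunE.
Qed.

Lemma fresh_seq (m : nat) (L : seq pt) :
  exists s : seq pt, [/\ size s = m, uniq s & all (fun x => x \notin L) s].
Proof.
elim: m => [|m [s [sz us als]]]; first by exists [::].
have [x Hx] := fresh_pt (L ++ s).
exists (x :: s); rewrite /= sz us; split => //.
  by rewrite andbT; apply: contra Hx => xs; rewrite mem_cat xs orbT.
by rewrite als andbT; apply: contra Hx => xL; rewrite mem_cat xL.
Qed.

Definition good (k : nat) (B : seq pt) :=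
  {in B &, forall x y : pt, x i0 = y i0 -> forall i : 'I_n, (i < k)%N -> x i = y i}.

Lemma sep_step (B : seq pt) (j : 'I_n) : j != i0 ->
  exists f, [/\ is_aut f, (forall (z : pt) i, i != i0 -> ev f z i = z i) &
     forall x y : pt, x \in B -> y \in B ->
     ev f x i0 = ev f y i0 -> x i0 = y i0 /\ x j = y j].
Proof.
move=> ji0.
have [l Hl] := fresh_CC [seq ((y : pt) i0 - (x : pt) i0) / (x j - y j) | x <- B, y <- B].
pose P := fun i : 'I_n => if i == i0 then l *: 'X else (0 : {poly CC}).
have Pj : P j = 0 by rewrite /P (negbTE ji0).
exists (shear j P); split; first exact: aut_shear.
  by move=> z i ii0; rewrite ?ev_shear ?ffunE /P (negbTE ii0) horner0 addr0.
move=> x y xB yB; rewrite !ev_shear !ffunE /P eqxx !hornerZ !hornerX => E.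
  case: (x j =P y j) => [e|ne].
    by split => //; move: E; rewrite e => /addIr.
  exfalso; apply/negP: Hl; rewrite negbK.
  have -> : l = (y i0 - x i0) / (x j - y j).
    apply: (@mulIf _ (x j - y j)); first by rewrite subr_eq0; apply/eqP.
    rewrite divfK ?subr_eq0; last by apply/eqP.
    rewrite mulrBr; apply/eqP; rewrite -subr_eq0; apply/eqP.
    have -> : l * x j - l * y j - (y i0 - x i0) = (x i0 + l * x j) - (y i0 + l * y j) by ring.
    by rewrite E subrr.
  by apply/allpairsP; exists (x, y).
Qed.

Lemma good_ind (A : seq pt) (k : nat) : (0 < k)%N -> (k <= n)%N ->
  exists f, is_aut f /\ good k (map (ev f) A).
Proof.
elim: k => [//|k IH] _ Hk.
case: (posnP k) => [k0|kpos].
  exists (pm_id n); split; first exact: aut_id.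
  move=> x y _ _ e i; rewrite k0 ltnS leqn0 => /eqP i0'.
  by have -> : i = i0 by apply: val_inj.
have [f [af gf]] := IH kpos (ltnW Hk).
pose j : 'I_n := Ordinal Hk.
have ji0 : j != i0 by rewrite -val_eqE /= -lt0n.
have [g [ag ei Hg]] := sep_step (map (ev f) A) ji0.
exists (pm_comp g f); split; first exact: aut_comp.
have -> : map (ev (pm_comp g f)) A = map (ev g) (map (ev f) A).
  by rewrite -map_comp; apply: eq_map => x /=; rewrite ev_comp.
move=> _ _ /mapP [x xB ->] /mapP [y yB ->] e i.
have [e0 ej] := Hg x y xB yB e.
case: (eqVneq i i0) => [-> //|ii0].
rewrite !ei // ltnS leq_eqVlt => /orP [/eqP ik|ik].
  by have -> : i = j by apply: val_inj; rewrite /= ik.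
exact: gf.
Qed.

Lemma sep (A : seq pt) : uniq A ->
  exists f, is_aut f /\ uniq [seq (ev f x : pt) i0 | x <- A].
Proof.
move=> uA; have [f [af gf]] := good_ind A (ltnW Hn) (leqnn n).
exists f; split => //.
have -> : [seq (ev f x : pt) i0 | x <- A] = [seq (x : pt) i0 | x <- map (ev f) A].
  by rewrite -map_comp.
rewrite map_inj_in_uniq; first by rewrite map_inj_uniq //; exact: aut_inj.
by move=> x y xB yB e; apply/ffunP => i; apply: gf.
Qed.

End Points.


Lemma addKr_gen (R : zmodType) (a b : R) : a + (b - a) = b.
Proof. by rewrite addrC subrK. Qed.

Section Canon.
Variable n : nat.
Hypothesis Hn : (1 < n)%N.
Let i0 : 'I_n := Ordinal (ltnW Hn).
Let i1 : 'I_n := Ordinal Hn.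
Local Notation pt := {ffun 'I_n -> CC}.
Let x0 : pt := [ffun => 0].

Definition uvec (k : nat) : pt := [ffun i => if i == i1 then k%:R else 0].
Definition U (r : nat) := [seq uvec k | k <- iota 0 r].

Lemma canon (A : seq pt) : uniq A ->
  exists f, is_aut f /\ map (ev f) A = U (size A).
Proof.
move=> uA; have [f1 [af1 u1]] := sep Hn uA.
set B := map (ev f1) A.
set xs := [seq (x : pt) i0 | x <- B].
have uxs : uniq xs by rewrite /xs -map_comp.
have szB : size B = size A by rewrite size_map.
pose P := fun i : 'I_n => if i == i0 then 0 else
  interpP xs (fun c => (if i == i1 then (index c xs)%:R else 0) - (nth x0 B (index c xs)) i).
have P0 : P i0 = 0 by rewrite /P eqxx.
have C2 : forall s, (s < size B)%N -> ev (shear i0 P) (nth x0 B s) =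
   [ffun i => if i == i0 then (nth x0 B s) i0 else if i == i1 then s%:R else 0].
  move=> s sB; apply/ffunP => i; rewrite ev_shear !ffunE.
  case: (eqVneq i i0) => [->|ii0]; first by rewrite P0 horner0 addr0.
  rewrite /P (negbTE ii0).
  have xsB : (nth x0 B s) i0 = nth 0 xs s.
    by rewrite /xs [RHS](nth_map x0).
  rewrite xsB interpP_spec //; last by rewrite mem_nth // size_map.
  rewrite index_uniq //; first exact: (@addKr_gen CC).
  by rewrite size_map.
pose ks := [seq k%:R : CC | k <- iota 0 (size B)].
have uks : uniq ks.
  by rewrite map_inj_uniq ?iota_uniq // => a b /eqP; rewrite eqr_nat => /eqP.
pose Q := fun i : 'I_n => if i == i0 then
  interpP ks (fun c => - (nth x0 B (index c ks)) i0) else 0.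
have Q1 : Q i1 = 0 by rewrite /Q.
have C3 : forall s, (s < size B)%N ->
   ev (shear i1 Q) [ffun i => if i == i0 then (nth x0 B s) i0 else if i == i1 then s%:R else 0]
   = uvec s.
  move=> s sB; apply/ffunP => i; rewrite ev_shear !ffunE.
  have -> : (if i1 == i0 then (nth x0 B s) i0 else if i1 == i1 then s%:R else 0) = s%:R :> CC.
    by rewrite eqxx.
  case: (eqVneq i i0) => [->|ii0].
    have sks : s%:R = nth 0 ks s by rewrite /ks (nth_map 0%N) ?size_iota // nth_iota.
    rewrite /Q eqxx sks interpP_spec //; last by rewrite mem_nth // size_map size_iota.
    rewrite index_uniq //; first exact: (@subrr CC).
    by rewrite size_map size_iota.
  by rewrite /Q (negbTE ii0) horner0 addr0.
exists (pm_comp (shear i1 Q) (pm_comp (shear i0 P) f1)); split.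
  exact: (aut_comp (aut_shear Q1) (aut_comp (aut_shear P0) af1)).
apply: (@eq_from_nth _ x0); first by rewrite /U !size_map size_iota.
move=> s; rewrite size_map => sA.
rewrite (nth_map x0) // /U (nth_map 0%N) ?size_iota // nth_iota // add0n.
rewrite !ev_comp.
have -> : ev f1 (nth x0 A s) = nth x0 B s by rewrite /B (nth_map x0).
by rewrite C2 ?szB // C3 ?szB.
Qed.

Lemma trans (A B : seq pt) : uniq A -> uniq B -> size A = size B ->
  exists f, is_aut f /\ map (ev f) A = B.
Proof.
move=> uA uB sz.
have [fA [aA eA]] := canon uA.
have [fB [aB eB]] := canon uB.
have [gB [gBfB fBgB]] := aB.
have agB : is_aut gB by exists fB.
exists (pm_comp gB fA); split; first exact: aut_comp.
have -> : map (ev (pm_comp gB fA)) A = map (ev gB) (map (ev fA) A).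
  by rewrite -map_comp; apply: eq_map => x /=; rewrite ev_comp.
rewrite eA sz -eB -map_comp -[RHS]map_id; apply: eq_map => x /=.
by rewrite -ev_comp fBgB ev_id.
Qed.

End Canon.


Section Ext.
Variable n : nat.
Hypothesis Hn : (1 < n)%N.
Local Notation pt := {ffun 'I_n -> CC}.
Let x0 : pt := [ffun => 0].

Definition stab (X : seq pt) (f : polymap n) :=
  is_aut f /\ {in X, forall x, ev f x \in X}.

Lemma count_mem_sym (X a : seq pt) : uniq X -> uniq a ->
  count (mem a) X = count (mem X) a.
Proof.
move=> uX ua; rewrite -!size_filter; apply: perm_size.
apply: uniq_perm; rewrite ?filter_uniq // => x.
by rewrite !mem_filter andbC.
Qed.

Lemma uniq_mkseq_in (f : nat -> pt) m :
  (forall i j, (i < m)%N -> (j < m)%N -> f i = f j -> i = j) -> uniq (mkseq f m).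
Proof.
move=> H; rewrite /mkseq map_inj_in_uniq ?iota_uniq // => i j.
by rewrite !mem_iota !add0n => /H Hi /Hi.
Qed.

Lemma ext (X a b : seq pt) : uniq X -> uniq a -> uniq b -> size a = size b ->
  (forall i, (i < size a)%N -> (nth x0 a i \in X) = (nth x0 b i \in X)) ->
  exists f, stab X f /\ map (ev f) a = b.
Proof.
move=> uX ua ub sab pat.
pose A := a ++ [seq x <- X | x \notin a].
pose B := b ++ [seq x <- X | x \notin b].
have uA : uniq A.
  rewrite cat_uniq ua filter_uniq // andbT; apply/hasPn => x.
  by rewrite mem_filter => /andP [].
have uB : uniq B.
  rewrite cat_uniq ub filter_uniq // andbT; apply/hasPn => x.
  by rewrite mem_filter => /andP [].
have cab : count (mem X) a = count (mem X) b.
  rewrite -(count_map _ id) -[in RHS](count_map _ id); congr count.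
  apply: (@eq_from_nth _ false); first by rewrite !size_map.
  move=> i; rewrite size_map => ia.
  by rewrite !(nth_map x0) -?sab //; apply: pat.
have sAB : size A = size B.
  rewrite !size_cat !size_filter sab; congr addn.
  apply/eqP; rewrite -(eqn_add2l (count (mem a) X)) count_predC.
  by rewrite count_mem_sym // cab -count_mem_sym // count_predC.
have [f [af eAB]] := trans Hn uA uB sAB.
move: eAB; rewrite /A /B map_cat => /eqP.
rewrite eqseq_cat ?size_map // => /andP [/eqP eab /eqP erest].
exists f; split => //; split => // x xX.
case: (boolP (x \in a)) => xa.
  have ix : (index x a < size a)%N by rewrite index_mem.
  rewrite -(nth_index x0 xa) -(nth_map x0 x0 (ev f)) // eab.
  by rewrite -pat // nth_index.
have : ev f x \in [seq ev f x | x <- [seq x <- X | x \notin a]].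
  by apply: map_f; rewrite mem_filter xa.
by rewrite erest mem_filter => /andP [].
Qed.

End Ext.


Section Group.
Variable n : nat.
Hypothesis Hn : (1 < n)%N.
Local Notation pt := {ffun 'I_n -> CC}.
Let x0 : pt := [ffun => 0].
Variable H : polymap n -> Prop.
Hypothesis HG : is_subgroup_aut H.
Variable D : seq pt.
Hypothesis uD : uniq D.
Hypothesis SH : forall f, stab D f -> H f.

Lemma H_aut f : H f -> is_aut f.
Proof. by case: HG => + _ _ _; apply. Qed.

Lemma H_comp f g : H f -> H g -> H (pm_comp f g).
Proof. by case: HG => _ _ + _; apply. Qed.

Lemma H_inv k : H k -> exists k', [/\ H k', pm_comp k k' = pm_id n & pm_comp k' k = pm_id n].
Proof.
move=> Hk; have [k' [e1 e2]] := H_aut Hk.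
by exists k'; split => //; case: HG => _ _ _; apply; [exact: Hk | | ].
Qed.

Lemma evK k k' x : pm_comp k' k = pm_id n -> ev k' (ev k x) = x.
Proof. by move=> e; rewrite -ev_comp e ev_id. Qed.

Lemma H_conj k f : H k -> stab (map (ev k) D) f -> H f.
Proof.
move=> Hk [af sf].
have [k' [Hk' kk' k'k]] := H_inv Hk.
have Hphi : H (pm_comp k' (pm_comp f k)).
  apply: SH; split.
    exact: (aut_comp (H_aut Hk') (aut_comp af (H_aut Hk))).
  move=> x xD; rewrite !ev_comp.
  have /sf /mapP [z zD ->] : ev k x \in map (ev k) D by apply: map_f.
  by rewrite evK.
have -> : f = pm_comp k (pm_comp (pm_comp k' (pm_comp f k)) k').
  rewrite -> (pm_compA k (pm_comp k' (pm_comp f k)) k').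
  rewrite -> (pm_compA k k' (pm_comp f k)).
  rewrite -> kk'. rewrite -> pm_1comp.
  rewrite <- (pm_compA f k k'). rewrite -> kk'. by rewrite -> pm_comp1.
exact: (H_comp Hk (H_comp Hphi Hk')).
Qed.

Definition R (e : seq pt) := exists k, H k /\ map (ev k) D = e.

Lemma R_D : R D.
Proof.
exists (pm_id n); split; first by case: HG.
by rewrite -[RHS]map_id; apply: eq_map => x; rewrite ev_id.
Qed.

Lemma sg_invol (t t0 s : nat) :
  let sg := fun s : nat => if s == t then t0 else if s == t0 then t else s in
  sg (sg s) = s.
Proof.
move=> sg; rewrite /sg /=.
case: (eqVneq s t) => [->|st].
  by case: (eqVneq t0 t) => [->|t0t]; rewrite ?eqxx.
case: (eqVneq s t0) => [->|st0]; first by rewrite ?eqxx.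
by rewrite ?(negbTE st) ?(negbTE st0).
Qed.

Lemma set_nth_mkseq (e : seq pt) t q : (t < size e)%N ->
  set_nth x0 e t q = mkseq (fun i => if i == t then q else nth x0 e i) (size e).
Proof.
move=> te; apply: (@eq_from_nth _ x0).
  by rewrite size_set_nth size_mkseq; apply/maxn_idPr.
move=> i; rewrite size_set_nth (maxn_idPr te) => ie.
by rewrite nth_set_nth nth_mkseq.
Qed.

Lemma uniq_set_nth (e : seq pt) t q : uniq e -> (t < size e)%N -> q \notin e ->
  uniq (set_nth x0 e t q).
Proof.
move=> ue te qe; rewrite set_nth_mkseq //; apply: uniq_mkseq_in => i j ie je.
case: (eqVneq i t) => [->|it]; case: (eqVneq j t) => [->|jt] //.
- by move=> E; move: qe; rewrite E mem_nth.
- by move=> E; move: qe; rewrite -E mem_nth.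
- by move/eqP; rewrite nth_uniq // => /eqP.
Qed.

Variables (h : polymap n) (p0 : pt).
Hypotheses (Hh : H h) (p0D : p0 \in D) (hp0 : ev h p0 \notin D).

Lemma base_swap t q : (t < size D)%N -> q \notin D -> R (set_nth x0 D t q).
Proof.
move=> tD qD.
set m := size D.
set t0 := index p0 D.
have t0D : (t0 < m)%N by rewrite index_mem.
pose sg := fun s : nat => if s == t then t0 else if s == t0 then t else s.
have sgK : forall s, sg (sg s) = s by move=> s; apply: sg_invol.
have sgm : forall s, (s < m)%N -> (sg s < m)%N.
  by move=> s sm; rewrite /sg; case: ifP => //; case: ifP.
have sgt : forall s, sg s = t -> s = t0.
  move=> s e; rewrite -(sgK s) e /sg eqxx //.
have [cs [scs ucs acs]] := fresh_seq Hn m (q :: D).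
have ncs : forall s, (s < m)%N -> nth x0 cs s \notin D /\ nth x0 cs s != q.
  move=> s sm; have := allP acs (nth x0 cs s) (mem_nth _ _).
  rewrite scs inE negb_or => /(_ sm) /andP [nq nD]; split => //.
pose e1 := map (ev h) D.
have ue1 : uniq e1 by rewrite map_inj_uniq //; exact: aut_inj (H_aut Hh).
have se1 : size e1 = m by rewrite size_map.
pose g := mkseq (fun s => if nth x0 e1 s \in D then nth x0 D (sg s) else nth x0 cs s) m.
have sg_ : size g = m by rewrite size_mkseq.
have pat : forall s, (s < m)%N -> (nth x0 e1 s \in D) = (nth x0 g s \in D).
  move=> s sm; rewrite nth_mkseq //; case: ifP => He.
    by rewrite mem_nth // sgm.
  by case: (ncs s sm) => /negbTE ->.
have ug : uniq g.
  apply: uniq_mkseq_in => i j im jm.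
  case: ifP => Hi; case: ifP => Hj.
  - move/eqP; rewrite nth_uniq ?sgm // => /eqP E.
    by rewrite -(sgK i) E sgK.
  - by move=> E; case: (ncs j jm); rewrite -E mem_nth ?sgm.
  - by move=> E; case: (ncs i im); rewrite E mem_nth ?sgm.
  - by move/eqP; rewrite nth_uniq ?scs // => /eqP.
have Dtg : nth x0 D t \notin g.
  apply/negP => /(nthP x0) [s]; rewrite sg_ => sm; rewrite nth_mkseq //.
  case: ifP => He.
    move/eqP; rewrite nth_uniq ?sgm // => /eqP /sgt st0.
    move: He; rewrite st0 /e1 (nth_map x0) // nth_index //.
    by rewrite (negbTE hp0).
  by move=> E; case: (ncs s sm); rewrite E mem_nth.
have qg : q \notin g.
  apply/negP => /(nthP x0) [s]; rewrite sg_ => sm; rewrite nth_mkseq //.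
  case: ifP => He.
    by move=> E; move: qD; rewrite -E mem_nth ?sgm.
  by move=> E; case: (ncs s sm); rewrite E eqxx.
have [f [sf ef]] : exists f, stab D f /\ map (ev f) e1 = g.
  apply: (ext Hn uD ue1 ug); first by rewrite se1.
  by move=> i; rewrite se1 => im; apply: pat.
have Hk : H (pm_comp f h) by exact: (H_comp (SH sf) Hh).
have ek : map (ev (pm_comp f h)) D = g.
  by rewrite -ef /e1 -map_comp; apply: eq_map => x /=; rewrite ev_comp.
have [f' [sf' ef']] : exists f', stab g f' /\ map (ev f') D = set_nth x0 D t q.
  apply: (ext Hn ug uD (uniq_set_nth uD tD qD)).
    by rewrite size_set_nth (maxn_idPr tD).
  move=> i im; rewrite nth_set_nth /=; case: (eqVneq i t) => [->|//].
  by rewrite (negbTE Dtg) (negbTE qg).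
exists f'; split => //.
by apply: (H_conj Hk); rewrite ek.
Qed.

Lemma swap e t q : R e -> (t < size e)%N -> q \notin e -> R (set_nth x0 e t q).
Proof.
move=> [k [Hk ek]] te qe.
have [k' [Hk' kk' k'k]] := H_inv Hk.
have sD : size D = size e by rewrite -ek size_map.
have q'D : ev k' q \notin D.
  apply: contra qe => q'D; rewrite -ek.
  have -> : q = ev k (ev k' q) by rewrite evK.
  exact: map_f.
have tD : (t < size D)%N by rewrite sD.
have [k2 [Hk2 ek2]] := base_swap tD q'D.
exists (pm_comp k k2); split; first exact: (H_comp Hk Hk2).
apply: (@eq_from_nth _ x0).
  by rewrite size_map size_set_nth sD (maxn_idPr te).
move=> i; rewrite size_map => iD.
rewrite (nth_map x0) // ev_comp.
rewrite -(nth_map x0 x0 (ev k2)) // ek2 !nth_set_nth /=.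
case: (eqVneq i t) => [_|it]; first by rewrite (evK q kk').
by rewrite -ek (nth_map x0).
Qed.

Lemma disjoint_move a b : R a -> uniq b -> size b = size a ->
  (forall x, x \in b -> x \notin a) -> R b.
Proof.
move=> Ra ub sba dis.
pose c := fun r => mkseq (fun i => if (i < r)%N then nth x0 b i else nth x0 a i) (size a).
have c0 : c 0%N = a.
  apply: (@eq_from_nth _ x0); first by rewrite size_mkseq.
  by move=> i; rewrite size_mkseq => ia; rewrite nth_mkseq.
have cm : c (size a) = b.
  apply: (@eq_from_nth _ x0); first by rewrite size_mkseq.
  by move=> i; rewrite size_mkseq => ia; rewrite nth_mkseq // ia.
suff : forall r, (r <= size a)%N -> R (c r) by move/(_ (size a) (leqnn _)); rewrite cm.
elim => [_|r IH ra]; first by rewrite c0.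
have sc : size (c r) = size a by rewrite size_mkseq.
have : R (set_nth x0 (c r) r (nth x0 b r)).
  apply: (swap (IH (ltnW ra))); first by rewrite sc.
  apply/negP => Hin; case/(nthP x0): Hin => i; rewrite sc => ia; rewrite nth_mkseq //; case: ifP => ir.
    have ia' : (i < size a)%N := ltn_trans ir ra.
    move/eqP; rewrite nth_uniq ?sba // => /eqP E.
    by rewrite E ltnn in ir.
  have rb : (r < size b)%N by rewrite sba.
  move=> E; have := dis (nth x0 b r) (mem_nth x0 rb).
  by rewrite -E mem_nth.
suff -> : c r.+1 = set_nth x0 (c r) r (nth x0 b r) by [].
apply: (@eq_from_nth _ x0).
  by rewrite size_set_nth sc (maxn_idPr ra) size_mkseq.
move=> i; rewrite size_mkseq => ia.
rewrite nth_set_nth /= !nth_mkseq // ltnS leq_eqVlt.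
by case: (eqVneq i r) => [->|].
Qed.

Lemma all_in_H g : is_aut g -> H g.
Proof.
move=> ag.
pose e := map (ev g) D.
have ue : uniq e by rewrite map_inj_uniq //; exact: aut_inj.
have [cs [scs ucs acs]] := fresh_seq Hn (size D) (D ++ e).
have Rc : R cs.
  apply: disjoint_move R_D ucs scs _ => x /(allP acs).
  by rewrite mem_cat negb_or => /andP [].
have Re : R e.
  apply: disjoint_move Rc ue _ _; first by rewrite size_map scs.
  move=> x xe; apply/negP => /(allP acs).
  by rewrite mem_cat xe orbT.
case: Re => k [Hk ek].
have [k' [Hk' kk' k'k]] := H_inv Hk.
have Hphi : H (pm_comp k' g).
  apply: SH; split; first exact: (aut_comp (H_aut Hk') ag).
  move=> x xD; rewrite ev_comp.
  have : ev g x \in map (ev k) D by rewrite ek; exact: map_f.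
  by case/mapP => z zD ->; rewrite evK.
have -> : g = pm_comp k (pm_comp k' g).
  rewrite -> (pm_compA k k' g). rewrite -> kk'. by rewrite -> pm_1comp.
exact: (H_comp Hk Hphi).
Qed.

End Group.


Section Zar.
Variables n d : nat.
Local Notation pt := {ffun 'I_n -> CC}.
Local Notation T := ('I_n * 'X_{1..n < d.+1})%type.

Definition Lform (x : pt) (i : 'I_n) (c : CC) : {mpoly CC[#|{: T}|]} :=
  \sum_(k < #|{: T}|) ((((enum_val k).1 == i)%:R *
       \prod_(j < n) x j ^+ (val (enum_val k).2 j)) *: 'X_k) - c%:MP.

Lemma Lform_eval (x : pt) i c (f : polymap n) : pm_deg_le d f ->
  (Lform x i c).@[fun k => pm_coords f (enum_val k)] = (tnth f i).@[x] - c.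
Proof.
move=> /forallP /(_ i) szf.
rewrite /Lform mevalB mevalC; congr (_ - _).
rewrite raddf_sum /=.
under eq_bigr => k _ do rewrite mevalZ mevalXU.
pose G := fun t : T => ((t.1 == i)%:R * \prod_(j < n) x j ^+ (val t.2 j)) * pm_coords f t.
rewrite -(big_enum_val G).
have -> : \sum_(t in {: T}) G t = \sum_(t : T) G t by apply: eq_bigl.
rewrite -(pair_bigA _ (fun a m => G (a, m))) (bigD1 i) //=.
rewrite [X in _ + X]big1 ?addr0; last first.
  by move=> a ai; apply: big1 => m _; rewrite /G /= (negbTE ai) mul0r mul0r.
rewrite [in RHS](mpolywE szf) raddf_sum /=; apply: eq_bigr => m _.
by rewrite /G /= eqxx mul1r mevalZ mevalX /pm_coords /= mulrC.
Qed.
Let x0 : pt := [ffun => 0].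

Lemma mem_prod (i0 : 'I_n) (e : pt) (D : seq pt) : (e \in D) <->
  (forall cf : nat -> 'I_n, \prod_(t < size D) (e (cf t) - (nth x0 D t) (cf t)) = 0).
Proof.
split.
  move=> eD cf; apply/eqP/prodf_eq0.
  have tD : (index e D < size D)%N by rewrite index_mem.
  by exists (Ordinal tD) => //=; rewrite nth_index // subrr.
move=> H; apply: contraT => eD.
pose cf := fun t => odflt i0 [pick i | e i != (nth x0 D t) i].
have /eqP := H cf; case/prodf_eq0 => t _; rewrite subr_eq0 /cf.
case: pickP => [i Hi|none]; first by rewrite (negbTE Hi).
have E : e = nth x0 D t by apply/ffunP => i; apply/eqP; move/negbT: (none i); rewrite negbK.
by move: eD; rewrite E mem_nth.
Qed.

Definition Pset (D : seq pt) (p : {mpoly CC[#|{: T}|]}) :=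
  exists x, x \in D /\ exists cf : nat -> 'I_n,
    p = \prod_(t < size D) Lform x (cf t) ((nth x0 D t) (cf t)).

Definition Zset (D : seq pt) (v : T -> CC) :=
  forall p, Pset D p -> p.@[fun k => v (enum_val k)] = 0.

Lemma Zset_char (i0 : 'I_n) (D : seq pt) (f : polymap n) : pm_deg_le d f ->
  Zset D (pm_coords f) <-> {in D, forall x, ev f x \in D}.
Proof.
move=> df.
have ev_prod : forall x cf, (\prod_(t < size D) Lform x (cf t) ((nth x0 D t) (cf t))).@[
   fun k => pm_coords f (enum_val k)] = \prod_(t < size D) (ev f x (cf t) - (nth x0 D t) (cf t)).
  move=> x cf; rewrite rmorph_prod /=; apply: eq_bigr => t _.
  by rewrite Lform_eval // ffunE.
split.
  move=> Z x xD; apply/(mem_prod i0) => cf; rewrite -ev_prod; apply: Z.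
  by exists x; split => //; exists cf.
move=> S p [x [xD [cf ->]]]; rewrite ev_prod.
by move/(mem_prod i0): (S x xD); apply.
Qed.

End Zar.


Section Final.
Variable n : nat.
Hypothesis Hn : (2 <= n)%N.
Local Notation pt := {ffun 'I_n -> CC}.
Variable Delta : ('I_n -> CC) -> Prop.
Variable s : seq ('I_n -> CC).
Hypothesis Hs : forall x, Delta x <-> List.In x s.

Definition toPt (x : 'I_n -> CC) : pt := [ffun i => x i].

Lemma toPt_inj x y : toPt x = toPt y -> x = y.
Proof.
move=> e; apply: functional_extensionality => i.
by have := congr1 (fun z : pt => z i) e; rewrite !ffunE.
Qed.

Lemma toPtK (z : pt) : toPt (fun i => z i) = z.
Proof. by apply/ffunP => i; rewrite ffunE. Qed.

Lemma ev_toPt f x : ev f (toPt x) = toPt (pm_eval f x).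
Proof.
apply/ffunP => i; rewrite !ffunE /pm_eval.
by apply: meval_eq => j; rewrite ffunE.
Qed.

Lemma In_map (l : seq ('I_n -> CC)) y : List.In y l <-> toPt y \in map toPt l.
Proof.
elim: l => [|z l IH] //=; rewrite inE; split.
  by case=> [->|/IH ->]; rewrite ?eqxx ?orbT.
by case/orP => [/eqP /toPt_inj ->|/IH]; [left | right].
Qed.

Definition D := undup (map toPt s).
Lemma uD : uniq D. Proof. exact: undup_uniq. Qed.

Lemma inD y : Delta y <-> toPt y \in D.
Proof. by rewrite mem_undup -In_map. Qed.

Lemma stab_onto f : stab D f -> {subset D <= map (ev f) D}.
Proof.
move=> [af sf].
have um : uniq (map (ev f) D) by rewrite map_inj_uniq ?uD //; exact: aut_inj.
have sub : {subset map (ev f) D <= D} by move=> y /mapP [x xD ->]; apply: sf.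
have [_ E] := uniq_min_size um sub (eq_leq (esym (size_map _ _))).
by move=> x; rewrite E.
Qed.

Lemma Stab_iff f : Stab Delta f <-> stab D f.
Proof.
split.
  move=> [af Hf]; split => // z zD.
  have Dz : Delta (fun i => z i) by apply/inD; rewrite toPtK.
  rewrite -(toPtK z) ev_toPt; apply/inD; apply/Hf.
  by exists (fun i => z i).
move=> [af sf]; split => // y; split.
  move/inD => /(stab_onto (conj af sf)) /mapP [z zD E].
  exists (fun i => z i); split; first by apply/inD; rewrite toPtK.
  by apply: toPt_inj; rewrite -ev_toPt toPtK.
case=> x [/inD xD <-]; apply/inD; rewrite -ev_toPt; exact: sf.
Qed.

Lemma S_subgroup : is_subgroup_aut (Stab Delta).
Proof.
split.
- by move=> f [].
- apply/Stab_iff; split; first exact: aut_id.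
  by move=> x xD; rewrite ev_id.
- move=> f g /Stab_iff [af sf] /Stab_iff [ag sg]; apply/Stab_iff; split.
    exact: (aut_comp af ag).
  by move=> x xD; rewrite ev_comp; apply: sf; apply: sg.
- move=> f g /Stab_iff Sf fg gf; apply/Stab_iff; split.
    by exists f.
  move=> x /(stab_onto Sf) /mapP [z zD ->].
  by rewrite -ev_comp gf ev_id.
Qed.

End Final.

Theorem proposition3p26 (n : nat) (Hn : (2 <= n)%N)
    (Delta : ('I_n -> CC) -> Prop)
    (Hfin : exists s : seq ('I_n -> CC), forall x, Delta x <-> List.In x s)
    (Hne : exists x, Delta x) :
  is_maximal_subgroup_aut (Stab Delta) /\ ind_closed (Stab Delta).
Proof.
have [s Hs] := Hfin.
have i0 : 'I_n := Ordinal (ltnW Hn).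
split.
  split; first exact: (S_subgroup Hs).
    have [x Dx] := Hne.
    have [q qD] := fresh_pt Hn (D s).
    have [f [af ef]] := trans Hn (A := [:: toPt x]) (B := [:: q]) erefl erefl erefl.
    exists f; split => // /(Stab_iff Hs) [_ sf].
    have := sf (toPt x); rewrite -(inD Hs) => /(_ Dx).
    by move: ef => /= [->]; rewrite (negbTE qD).
  move=> H HG SH.
  case: (Classical_Prop.classic (forall f, H f -> Stab Delta f)) => [L|NL]; first by left.
  right.
  have [h Hh] := Classical_Pred_Type.not_all_ex_not _ _ NL.
  have [Hh' NSh] := Classical_Prop.imply_to_and _ _ Hh.
  have ah := H_aut HG Hh'.
  have : ~~ all (fun x => ev h x \in D s) (D s).
    apply/negP => /allP A; apply: NSh; apply/(Stab_iff Hs); split => //.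
  case/allPn => p0 p0D hp0.
  have SH' : forall f, stab (D s) f -> H f by move=> f /(Stab_iff Hs); apply: SH.
  move=> g ag; exact: (all_in_H Hn HG (uD s) SH' Hh' p0D hp0 ag).
move=> d; exists (@Zset n d (D s)); split.
  by exists (@Pset n d (D s)) => v; split.
move=> f af df; rewrite (Stab_iff Hs) (Zset_char i0 _ df).
by split; [case | split].
Qed.
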